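(* Let $L\ge1$ be an integer and $\theta>0$. Let $\Omega=\{0,1\}^I$ for a countable index set $I$, equipped with a product probability measure, and partially ordered coordinatewise. For $t=0,1,\dots,L$ let $S_t:\Omega\to(0,\infty]$ be nonincreasing functions (the SIR of a typical link at time $t$, as a function of the configuration $\omega$ of active interferers), such that $P(S_t>\theta)=1-P_b$ for all $t$, with $P_b\in[0,1)$. Define $$P_{\text{fail}}=1-\frac{P(S_0>\theta,S_1>\theta,\dots,S_L>\theta)}{P(S_0>\theta)},\qquad P_{out}=P_b+(1-P_b)P_{\text{fail}}.$$ Then $P_{out}\le 1-(1-P_b)^{L+1}$.
   Context: CSMA model with energy-harvesting transmitters: a packet occupies $L$ slots; the typical transmitter backs off (with probability $P_b$) if its SIR at time $0$ is at most $\theta$, and otherwise transmits, the transmission failing if the SIR drops to at most $\theta$ at some time $1,\dots,L$. The configuration $\omega$ records which interferers are active at each time, with independent activity indicators (the paper's independence approximation), and since adding active interferers cannot increase the SIR, each $S_t$ is nonincreasing in $\omega$; all SIRs are identically distributed. $P_{out}$ is the outage probability. *)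

(* Defs.v *)
From HB Require Import structures.
From mathcomp Require Import all_boot all_order all_algebra.
From mathcomp Require Import all_classical all_reals.
From mathcomp Require Import all_analysis measurable_realfun.
Set Implicit Arguments. Unset Strict Implicit. Unset Printing Implicit Defensive.
Import Order.TTheory GRing.Theory Num.Theory.
Local Open Scope classical_set_scope.
Local Open Scope ring_scope.

(* Generators of the product sigma-algebra on {0,1}^I : the coordinate
   cylinders {w | w i = true}. *)
Definition cylinders (I : Type) : set (set (I -> bool)) :=
  [set A | exists i, A = [set w | w i = true]].

Notation Omega I := (@g_sigma_algebraType (I -> bool) (@cylinders I)).

(* P is a product (Bernoulli) probability measure on {0,1}^I: there are
   p_i in [0,1] such that the coordinates are independent Bernoulli(p_i),
   i.e. every finite-dimensional cylinder has product probability. *)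
Definition is_product_measure (R : realType) (I : countType)
  (P : probability (Omega I) R) : Prop :=
  exists p : I -> R, (forall i, 0 <= p i <= 1) /\
    forall (s : seq I) (b : I -> bool), uniq s ->
      P [set w : Omega I | forall i, i \in s -> w i = b i] =
      (\prod_(i <- s) (if b i then p i else 1 - p i))%:E.

Definition conf_le (I : Type) (w w' : I -> bool) : Prop :=
  forall i, w i -> w' i.

Definition Pfail (R : realType) (I : countType) (P : probability (Omega I) R)
  (S : nat -> Omega I -> \bar R) (theta : R) (L : nat) : R :=
  1 - fine (P [set w | forall t, (t <= L)%N -> (theta%:E < S t w)%E])
      / fine (P [set w | (theta%:E < S 0%N w)%E]).

Definition Pout (R : realType) (I : countType) (P : probability (Omega I) R)
  (S : nat -> Omega I -> \bar R) (theta Pb : R) (L : nat) : R :=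
  Pb + (1 - Pb) * Pfail P S theta L.

(* Main.v *)
Require Import Defs.
From HB Require Import structures.
From mathcomp Require Import all_boot all_order all_algebra.
From mathcomp Require Import all_classical all_reals.
From mathcomp Require Import all_analysis measurable_realfun.
From mathcomp Require Import ring lra.
Import Order.TTheory GRing.Theory Num.Theory.
Import numFieldNormedType.Exports.
Local Open Scope classical_set_scope.
Local Open Scope ring_scope.
Section Harris.
Context (R : realType) (I : countType) (P : probability (Omega I) R).
Local Notation T := (Omega I).

Definition pr (E : set T) : R := fine (P E).

Lemma prE E : measurable E -> P E = (pr E)%:E.
Proof.
move=> mE; rewrite /pr fineK // ge0_fin_numE ?measure_ge0 //.
by rewrite (le_lt_trans (probability_le1 P mE)) // ltry.
Qed.

Lemma pr_ge0 E : 0 <= pr E.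
Proof. by rewrite /pr fine_ge0 // measure_ge0. Qed.

Lemma pr_le1 E : measurable E -> pr E <= 1.
Proof. by move=> mE; rewrite -lee_fin -prE // probability_le1. Qed.

Lemma prT : pr setT = 1.
Proof. by rewrite /pr probability_setT. Qed.

Lemma pr0 : pr set0 = 0.
Proof. by rewrite /pr measure0. Qed.

Lemma pr_le A B : measurable A -> measurable B -> A `<=` B -> pr A <= pr B.
Proof.
move=> mA mB AB; rewrite -lee_fin -!prE //; apply: le_measure => //; by rewrite inE.
Qed.

Lemma prU A B : measurable A -> measurable B -> A `&` B = set0 ->
  pr (A `|` B) = pr A + pr B.
Proof.
move=> mA mB AB; apply: EFin_inj; rewrite EFinD -!prE //; last exact: measurableU.
exact: measureU.
Qed.

Lemma prU2 A B : measurable A -> measurable B -> pr (A `|` B) <= pr A + pr B.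
Proof.
move=> mA mB; rewrite -lee_fin EFinD -!prE //; last exact: measurableU.
exact: measureU2.
Qed.

Lemma prDI A B : measurable A -> measurable B -> pr A = pr (A `\` B) + pr (A `&` B).
Proof.
move=> mA mB; rewrite -prU //; [|exact: measurableD|exact: measurableI|].
  by rewrite -setDDr setDv setD0.
by rewrite setDE setIACA setICl setI0.
Qed.

Lemma prC A : measurable A -> pr (setT `\` A) = 1 - pr A.
Proof.
move=> mA; rewrite -prT (@prDI setT A measurableT mA) setTI; ring.
Qed.


Definition cyl (K : seq I) (y : I -> bool) : set T :=
  [set w | forall k, k \in K -> w k = y k].

Lemma meas_const (Q : Prop) : measurable [set _ : T | Q].
Proof.
case: (pselect Q) => hQ.
  by rewrite (_ : [set _ | Q] = setT) //; apply/seteqP; split.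
by rewrite (_ : [set _ | Q] = set0) //; apply/seteqP; split.
Qed.

Lemma meas_coord (i : I) (b : bool) : measurable [set w : T | w i = b].
Proof.
have hg : measurable [set w : T | w i = true].
  by apply: sub_sigma_algebra; exists i.
case: b => //.
rewrite (_ : [set w : T | w i = false] = ~` [set w : T | w i = true]).
  exact: measurableC.
by apply/seteqP; split => w /=; case: (w i).
Qed.

Lemma cyl_meas K y : measurable (cyl K y).
Proof.
elim: K => [|k K IH].
  by rewrite (_ : cyl [::] y = setT) //; apply/seteqP; split => w //=.
rewrite (_ : cyl (k :: K) y = [set w : T | w k = y k] `&` cyl K y).
  by apply: measurableI; [exact: meas_coord|exact: IH].
apply/seteqP; split => w /=.
  by move=> h; split; [apply: h; rewrite inE eqxx | move=> j jK; apply: h; rewrite inE jK orbT].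
by move=> [h1 h2] j; rewrite inE => /orP[/eqP->//|]; apply: h2.
Qed.

Definition upd (J : seq I) (w v : I -> bool) : I -> bool :=
  fun k => if k \in J then w k else v k.

Lemma upd_meas J w : measurable_fun setT (upd J w : T -> T).
Proof.
apply: (@measurability _ _ T T setT (upd J w : T -> T) (@cylinders I)) => //.
move=> _ [B [i ->] <-].
rewrite setTI /preimage /upd /=.
case: (i \in J); last exact: meas_coord.
exact: meas_const.
Qed.


Definition Gc : set (set T) :=
  [set C | C = set0 \/ exists K y, uniq K /\ C = cyl K y].

Lemma Gc_meas : Gc `<=` measurable.
Proof. by move=> C [->|[K [y [_ ->]]]]; [exact: measurable0|exact: cyl_meas]. Qed.

Lemma Gc_gen : @measurable _ T = <<s Gc >>.
Proof.
apply/seteqP; split.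
  apply: smallest_sub => //.
  move=> _ [i ->]; apply: sub_sigma_algebra; right; exists [:: i], (fun _ => true).
  split => //; apply/seteqP; split => w /=.
    by move=> h k; rewrite inE => /eqP ->.
  by move=> h; apply: h; rewrite inE.
apply: smallest_sub; first exact: sigma_algebra_measurable.
exact: Gc_meas.
Qed.

Lemma Gc_setI : setI_closed Gc.
Proof.
move=> A B [->|[K [y [uK ->]]]]; first by rewrite set0I; left.
move=> [->|[K' [y' [uK' ->]]]]; first by rewrite setI0; left.
case: (pselect (exists k, k \in K /\ k \in K' /\ y k <> y' k)) => hk.
  left; apply/seteqP; split => // w [h1 h2].
  case: hk => k [kK [kK' yy]]; apply: yy.
  by rewrite -(h1 _ kK) -(h2 _ kK').
right; exists (undup (K ++ K')), (fun k => if k \in K then y k else y' k).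
split; first exact: undup_uniq.
apply/seteqP; split => w /=.
  move=> [h1 h2] k; rewrite mem_undup mem_cat.
  by case: ifP => kK /=; [move=> _; apply: h1|apply: h2].
move=> h; split => k kk.
  by have := h k; rewrite mem_undup mem_cat kk /=; apply.
have := h k; rewrite mem_undup mem_cat kk orbT => /(_ isT).
case: ifP => // kK ->.
case: (y k =P y' k) => // yy; exfalso; apply: hk; exists k; split => //.
Qed.

Context (p : I -> R) (hp : forall i, 0 <= p i <= 1)
  (hP : forall s b, uniq s -> P (cyl s b) = (\prod_(i <- s) (if b i then p i else 1 - p i))%:E).

Definition q (i : I) (b : bool) : R := if b then p i else 1 - p i.

Lemma q_ge0 i b : 0 <= q i b.
Proof. by rewrite /q; case: b; have := hp i; lra. Qed.

Lemma pr_cyl K y : uniq K -> pr (cyl K y) = \prod_(k <- K) q k (y k).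
Proof. by move=> uK; rewrite /pr hP. Qed.


Lemma D1cyl i w K y : uniq K ->
  pr (cyl K y `&` cyl [:: i] w) = q i (w i) * pr (upd [:: i] w @^-1` cyl K y).
Proof.
move=> uK.
have upd_i v : upd [:: i] w v i = w i by rewrite /upd inE eqxx.
have upd_k v k : k != i -> upd [:: i] w v k = v k.
  by move=> ki; rewrite /upd inE (negbTE ki).
case iK: (i \in K); last first.
  have -> : cyl K y `&` cyl [:: i] w = cyl (i :: K) (upd [:: i] w y).
    apply/seteqP; split => v /=.
      move=> [h1 h2] k; rewrite inE => /orP[/eqP->|kK].
        by rewrite upd_i; apply: h2; rewrite inE.
      by rewrite upd_k ?h1 //; apply: contraTneq kK => ->; rewrite iK.
    move=> h; split => k kK.
      by rewrite h ?inE ?kK ?orbT // upd_k //; apply: contraTneq kK => ->; rewrite iK.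
    by rewrite h; move: kK; rewrite inE => /eqP ->; rewrite ?upd_i ?inE ?eqxx.
  have -> : upd [:: i] w @^-1` cyl K y = cyl K y.
    apply/seteqP; split => v /= h k kK; have := h k kK;
      by rewrite upd_k //; apply: contraTneq kK => ->; rewrite iK.
  rewrite !pr_cyl //=; last by rewrite iK.
  rewrite big_cons upd_i; congr (_ * _); apply: eq_big_seq => k kK.
  by rewrite upd_k //; apply: contraTneq kK => ->; rewrite iK.
case: (y i =P w i) => yw; last first.
  have -> : cyl K y `&` cyl [:: i] w = set0.
    apply/seteqP; split => // v /= [h1 h2]; apply: yw.
    by rewrite -(h1 _ iK) h2 // inE.
  have -> : upd [:: i] w @^-1` cyl K y = set0.
    apply/seteqP; split => // v /= h; apply: yw.
    by rewrite -(h _ iK) upd_i.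
  by rewrite pr0 mulr0.
have -> : cyl K y `&` cyl [:: i] w = cyl K y.
  apply/seteqP; split => v /=; first by case.
  move=> h; split => // k; rewrite inE => /eqP ->; rewrite -yw; exact: h.
have -> : upd [:: i] w @^-1` cyl K y = cyl (rem i K) y.
  apply/seteqP; split => v /= h k.
    rewrite (mem_rem_uniq _ uK) inE => /andP[ki kK].
    by rewrite -(h _ kK) upd_k.
  move=> kK; case: (k =P i) => [->|/eqP ki]; first by rewrite upd_i.
  by rewrite upd_k // h // (mem_rem_uniq _ uK) inE ki.
rewrite !pr_cyl //; last exact: rem_uniq.
by rewrite (big_rem _ iK) yw.
Qed.


Definition pf (f : T -> T) (mf : measurable_fun setT f) : {measure set T -> \bar R}.
Proof. refine (pushforward P f : {measure set T -> \bar R}); exact mf. Defined.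

Lemma D1 i w E : measurable E ->
  pr (E `&` cyl [:: i] w) = q i (w i) * pr (upd [:: i] w @^-1` E).
Proof.
move=> mE.
pose m1 := mrestr P (cyl_meas [:: i] w).
pose m2 := mscale (NngNum (q_ge0 i (w i))) (@pf _ (upd_meas [:: i] w)).
have m12 : m1 E = m2 E.
  apply: (measure_unique Gc (fun _ => setT)) => //.
  - exact: Gc_gen.
  - exact: Gc_setI.
  - by move=> _; right; exists [::], (fun _ => true); split => //; apply/seteqP; split.
  - by rewrite bigcup_const.
  - move=> C [->|[K [y [uK ->]]]].
      unfold mrestr, mscale, pf, pushforward.
      exact: (etrans (measure0 _) (esym (measure0 _))).
    change (P (cyl K y `&` cyl [::i] w) = ((q i (w i))%:E * P (upd [::i] w @^-1` cyl K y))%E).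
    rewrite prE; last by apply: measurableI; apply: cyl_meas.
    rewrite prE; last by rewrite -[X in measurable X]setTI; apply: upd_meas => //; exact: cyl_meas.
    by rewrite D1cyl.
  - by move=> _; change (P (setT `&` cyl [::i] w) < +oo)%E; rewrite setTI (le_lt_trans (probability_le1 _ _)) ?ltry //; exact: cyl_meas.
move: m12.
change (P (E `&` cyl [::i] w) = ((q i (w i))%:E * P (upd [::i] w @^-1` E))%E ->
  pr (E `&` cyl [:: i] w) = q i (w i) * pr (upd [:: i] w @^-1` E)).
rewrite prE; last by apply: measurableI => //; apply: cyl_meas.
rewrite prE; last by rewrite -[X in measurable X]setTI; apply: upd_meas.
by case.
Qed.


Lemma pre_meas J w (X : set T) : measurable X -> measurable (upd J w @^-1` X : set T).
Proof. by move=> mX; rewrite -[X in measurable X]setTI; apply: upd_meas. Qed.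

Lemma avg i F : measurable F ->
  pr F = p i * pr (upd [:: i] (fun _ => true) @^-1` F)
       + (1 - p i) * pr (upd [:: i] (fun _ => false) @^-1` F).
Proof.
move=> mF; rewrite (@prDI F (cyl [:: i] (fun _ => true)) mF (cyl_meas _ _)).
rewrite D1 // (_ : F `\` cyl [:: i] (fun _ => true) = F `&` cyl [:: i] (fun _ => false)).
  by rewrite D1 // /q addrC.
apply/seteqP; split => v /= [h1 h2]; split => //.
  move=> k; rewrite inE => /eqP ->; case E: (v i) => //; exfalso; apply: h2.
  by move=> k'; rewrite inE => /eqP ->.
move=> h3; have := h2 i; rewrite inE eqxx => /(_ isT).
by have := h3 i; rewrite inE eqxx => /(_ isT) ->.
Qed.

Definition h (J : seq I) (w : I -> bool) (X : set T) : R := pr (upd J w @^-1` X).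

Lemma upd_comp J i w b : i \notin J ->
  (upd J w) \o (upd [:: i] (fun _ => b)) = upd (i :: J) (upd [:: i] (fun _ => b) w).
Proof.
move=> iJ; apply: funext => v; apply: funext => k; rewrite /upd /= !inE.
case: (k =P i) => [->|_] /=; first by rewrite (negbTE iJ).
by case: (k \in J).
Qed.

Lemma h_avg J i w X : measurable X -> i \notin J ->
  h J w X = p i * h (i :: J) (upd [:: i] (fun _ => true) w) X
          + (1 - p i) * h (i :: J) (upd [:: i] (fun _ => false) w) X.
Proof.
move=> mX iJ; rewrite /h (@avg i _ (pre_meas J w X mX)).
have e b : upd [:: i] (fun _ => b) @^-1` (upd J w @^-1` X) =
    upd (i :: J) (upd [:: i] (fun _ => b) w) @^-1` X by rewrite -upd_comp.
by rewrite !e.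
Qed.

Definition decr (A : set T) := forall v v' : I -> bool, conf_le v v' -> A v' -> A v.

Lemma h_mono J w w' A : measurable A -> decr A -> conf_le w w' -> h J w' A <= h J w A.
Proof.
move=> mA dA ww'; apply: pr_le; try exact: pre_meas.
move=> v /=; apply: dA => k; rewrite /upd; case: (k \in J) => //; exact: ww'.
Qed.

Lemma h_ge0 J w X : 0 <= h J w X.
Proof. exact: pr_ge0. Qed.

Definition Gprop A B D J := forall w, h J w A * h J w B - h J w D <= h J w (A `&` B).

Lemma Gstep A B D J i : measurable A -> measurable B -> measurable D ->
  decr A -> decr B -> i \notin J -> Gprop A B D (i :: J) -> Gprop A B D J.
Proof.
move=> mA mB mD dA dB iJ HG w.
have mAB : measurable (A `&` B) by exact: measurableI.
rewrite (h_avg J i w A mA iJ) (h_avg J i w B mB iJ) (h_avg J i w D mD iJ) (h_avg J i w (A `&` B) mAB iJ).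
set w1 := upd [:: i] (fun _ => true) w.
set w0 := upd [:: i] (fun _ => false) w.
have w01 : conf_le w0 w1 by move=> k; rewrite /w0 /w1 /upd; case: (k \in [:: i]).
have fA := h_mono (i :: J) w0 w1 A mA dA w01.
have fB := h_mono (i :: J) w0 w1 B mB dB w01.
have H1 := HG w1; have H0 := HG w0.
have := hp i; move: fA fB H1 H0.
set a1 := h _ w1 A; set a0 := h _ w0 A; set b1 := h _ w1 B; set b0 := h _ w0 B.
set d1 := h _ w1 D; set d0 := h _ w0 D; set c1 := h _ w1 _; set c0 := h _ w0 (A `&` B).
move=> fA fB H1 H0 /andP[p0 p1].
have key : 0 <= p i * (1 - p i) * ((a0 - a1) * (b0 - b1)).
  by apply: mulr_ge0; [apply: mulr_ge0; lra|apply: mulr_ge0; lra].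
have e1 : 0 <= p i * (c1 - (a1 * b1 - d1)) by apply: mulr_ge0; lra.
have e0 : 0 <= (1 - p i) * (c0 - (a0 * b0 - d0)) by apply: mulr_ge0; lra.
rewrite -subr_ge0.
have -> : p i * c1 + (1 - p i) * c0 -
  ((p i * a1 + (1 - p i) * a0) * (p i * b1 + (1 - p i) * b0) - (p i * d1 + (1 - p i) * d0))
  = p i * (c1 - (a1 * b1 - d1)) + (1 - p i) * (c0 - (a0 * b0 - d0))
    + p i * (1 - p i) * ((a0 - a1) * (b0 - b1)) by ring.
by rewrite !addr_ge0.
Qed.


Definition dep (K : seq I) (C : set T) :=
  forall v v' : I -> bool, (forall k, k \in K -> v k = v' k) -> C v -> C v'.

Definition symd (A C : set T) : set T := (A `\` C) `|` (C `\` A).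

Lemma symd_meas A C : measurable A -> measurable C -> measurable (symd A C).
Proof. by move=> mA mC; apply: measurableU; apply: measurableD. Qed.

Lemma Gbase A B C K : measurable A -> measurable B -> measurable C -> dep K C ->
  Gprop A B (symd A C) K.
Proof.
move=> mA mB mC dC w; rewrite /h.
have mAp := pre_meas K w A mA; have mBp := pre_meas K w B mB.
set al := upd K w @^-1` A; set be := upd K w @^-1` B.
have -> : upd K w @^-1` (A `&` B) = al `&` be by [].
have cE : forall v, C (upd K w v) <-> C w.
  move=> v; split; apply: dC => k kK; rewrite /upd kK //.
have hb1 := @pr_le1 _ mBp; have ha1 := @pr_le1 _ mAp.
have ha0 := pr_ge0 al; have hb0 := pr_ge0 be.
have hab0 := pr_ge0 (al `&` be).
case: (pselect (C w)) => Cw.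
  have -> : upd K w @^-1` symd A C = setT `\` al.
    apply/seteqP; split => v /=; rewrite /symd /=.
      by case=> -[]; [move=> _ /cE|].
    by move=> [_ nA]; right; split => //; apply/cE.
  rewrite prC //.
  have := @prDI be al mBp mAp.
  have : pr (be `\` al) <= pr (setT `\` al).
    by apply: pr_le; [exact: measurableD|exact: measurableD|move=> v [_ ?]].
  rewrite prC // setIC => h1 h2.
  have : pr al * pr be <= pr be by rewrite ler_piMl.
  lra.
have -> : upd K w @^-1` symd A C = al.
  apply/seteqP; split => v /=; rewrite /symd /=.
    by case=> -[] // /cE.
  by move=> Av; left; split => // /cE.
have : pr al * pr be <= pr al by rewrite ler_piMr.
lra.
Qed.

Lemma Gall A B D : measurable A -> measurable B -> measurable D ->
  decr A -> decr B ->
  forall s t, uniq (s ++ t) -> Gprop A B D (s ++ t) -> Gprop A B D t.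
Proof.
move=> mA mB mD dA dB; elim=> [//|i s IH] t /= /andP[it ust] HG.
apply: IH => //; exact: (@Gstep A B D (s ++ t) i mA mB mD dA dB it HG).
Qed.

Lemma h_nil w X : h [::] w X = pr X.
Proof.
rewrite /h; congr pr; apply/seteqP; split => v /=;
  by rewrite (_ : upd [::] w v = v) //; apply: funext => k.
Qed.

Lemma harris_approx A B C K : measurable A -> measurable B -> measurable C ->
  decr A -> decr B -> dep K C ->
  pr A * pr B - pr (symd A C) <= pr (A `&` B).
Proof.
move=> mA mB mC dA dB dC.
have dC' : dep (undup K) C.
  by move=> v v' hv; apply: dC => k kK; apply: hv; rewrite mem_undup.
have := @Gall A B (symd A C) mA mB (@symd_meas A C mA mC) dA dB (undup K) [::].
rewrite cats0 => /(_ (undup_uniq K) (@Gbase A B C (undup K) mA mB mC dC')) /(_ (fun _ => true)).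
by rewrite !h_nil.
Qed.


Fixpoint fu (F : nat -> set T) (N : nat) : set T :=
  if N is N'.+1 then fu F N' `|` F N' else set0.

Fixpoint fk (K : nat -> seq I) (N : nat) : seq I :=
  if N is N'.+1 then fk K N' ++ K N' else [::].

Lemma fuP F N v : fu F N v <-> exists n, (n < N)%N /\ F n v.
Proof.
elim: N => [|N IH] /=; first by split => // -[n []].
split.
  case=> [/IH [n [nN Fn]]|FN]; first by exists n; split => //; apply: ltnW.
  by exists N; split.
move=> [n [nN Fn]]; move: nN; rewrite ltnS leq_eqVlt => /orP[/eqP nE|nN].
  by right; rewrite -nE.
by left; apply/IH; exists n.
Qed.

Lemma fu_meas F N : (forall n, measurable (F n)) -> measurable (fu F N).
Proof. by move=> mF; elim: N => [|N IH] //=; apply: measurableU. Qed.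

Lemma fu_dep K C N : (forall n, dep (K n) (C n)) -> dep (fk K N) (fu C N).
Proof.
move=> dC; elim: N => [|N IH] //= v v' hv [Cv|Cv].
  by left; apply: (IH v) => // k kK; apply: hv; rewrite mem_cat kK.
by right; apply: (dC N v) => // k kK; apply: hv; rewrite mem_cat kK orbT.
Qed.

Lemma fu_pr Y N e : (forall n, measurable (Y n)) -> (forall n, pr (Y n) <= e) ->
  pr (fu Y N) <= N%:R * e.
Proof.
move=> mY hY; elim: N => [|N IH] /=; first by rewrite pr0 mul0r.
apply: le_trans (@prU2 _ _ (fu_meas Y N mY) (mY N)) _.
by rewrite -nat1r mulrDl mul1r addrC; apply: lerD.
Qed.

Definition Gap (E : set T) := measurable E /\
  forall eps, 0 < eps -> exists K C, measurable C /\ dep K C /\ pr (symd E C) <= eps.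

Lemma Gap_sigma : sigma_algebra setT Gap.
Proof.
split.
- split; first exact: measurable0.
  move=> eps e0; exists [::], set0; split; first exact: measurable0.
  split => //; rewrite (_ : symd set0 set0 = set0) ?pr0 ?ltW //.
  by apply/seteqP; split => v // [[]|[]].
- move=> A [mA HA]; split; first exact: measurableD.
  move=> eps e0; have [K [C [mC [dC hC]]]] := HA eps e0.
  exists K, (setT `\` C); split; first exact: measurableD.
  split.
    move=> v v' hv [_ nC]; split => // Cv'; apply: nC.
    by apply: (dC v') => // k kK; rewrite hv.
  rewrite (_ : symd _ _ = symd A C) //.
  apply/seteqP; split => v; rewrite /symd /=.
    by case=> -[[_ nA] nC]; [right|left]; split => //; apply: contrapT => H; apply: nC.
  case=> -[h1 h2]; [right|left]; split => //; by case.
- move=> F HF.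
  have mF n : measurable (F n) by case: (HF n).
  have mU : measurable (\bigcup_k F k) by exact: bigcupT_measurable.
  split => // eps e0.
  have ndF : nondecreasing_seq (fu F).
    apply/nondecreasing_seqP => n /=; apply/subsetPset => v Fv; by left.
  have UF : \bigcup_n fu F n = \bigcup_k F k.
    apply/seteqP; split => v.
      by move=> [n _ /fuP [m [_ Fm]]]; exists m.
    by move=> [m _ Fm]; exists m.+1 => //; apply/fuP; exists m.
  have mU' : measurable (\bigcup_n fu F n) by rewrite UF.
  have cv := nondecreasing_cvg_mu (fun n => fu_meas F n mF) mU' ndF.
  have cv2 : (fun n => P (fu F n)) @ \oo --> P (\bigcup_n fu F n) := cv R P.
  rewrite UF (prE _ mU) in cv2.
  have cv' : pr (fu F n) @[n --> \oo] --> pr (\bigcup_k F k).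
    by apply: fine_cvg; exact: cv2.
  have e2 : 0 < eps / 2 by rewrite divr_gt0.
  have [N _ HN] := cvgr_dist_le _ _ cv' _ e2.
  have HNN := HN N (leqnn N); rewrite /= in HNN.
  set e' := eps / 2 / (N.+1)%:R.
  have e'0 : 0 < e' by rewrite divr_gt0 // ltr0Sn.
  have hC : forall n, exists KC : seq I * set T,
      measurable KC.2 /\ dep KC.1 KC.2 /\ pr (symd (F n) KC.2) <= e'.
    move=> n; have [_ Hn] := HF n; have [K [C [mC [dC hC]]]] := Hn e' e'0.
    by exists (K, C).
  case: (choice hC) => KC HKC.
  exists (fk (fun n => (KC n).1) N), (fu (fun n => (KC n).2) N).
  have mC n : measurable (KC n).2 by case: (HKC n).
  have mY n : measurable (symd (F n) (KC n).2) by apply: symd_meas.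
  split; first exact: fu_meas.
  split; first by apply: fu_dep => n; case: (HKC n) => _ [].
  have sub : symd (\bigcup_k F k) (fu (fun n => (KC n).2) N) `<=`
      (\bigcup_k F k `\` fu F N) `|` fu (fun n => symd (F n) (KC n).2) N.
    move=> v [[Uv nC]|[/fuP [n [nN Cn]] nU]].
      case: (pselect (fu F N v)) => [/fuP [n [nN Fn]]|nF]; last by left.
      right; apply/fuP; exists n; split => //; left; split => // Cn; apply: nC.
      by apply/fuP; exists n.
    right; apply/fuP; exists n; split => //; right; split => // Fn; apply: nU.
    by exists n.
  have mS := fu_meas _ N mY.
  have mFN := fu_meas F N mF.
  apply: le_trans (pr_le _ _ _ _ sub) _.
  - by apply: symd_meas => //; exact: fu_meas.
  - by apply: measurableU => //; exact: measurableD.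
  apply: le_trans (@prU2 _ _ (measurableD mU mFN) mS) _.
  have h1 : pr (\bigcup_k F k `\` fu F N) <= eps / 2.
    rewrite (@prDI (\bigcup_k F k) (fu F N) mU mFN) in HNN.
    rewrite (_ : \bigcup_k F k `&` fu F N = fu F N) in HNN; last first.
      by apply/seteqP; split => [v [] //|v Fv]; split => //; rewrite -UF; exists N.
    have := pr_ge0 (\bigcup_k F k `\` fu F N).
    move: HNN; set a := pr _; set b := pr _ => HNN a0.
    rewrite (_ : a + b - b = a) in HNN; last by ring.
    by rewrite ger0_norm in HNN.
  have h2 : pr (fu (fun n => symd (F n) (KC n).2) N) <= N%:R * e'.
    by apply: fu_pr => // n; case: (HKC n) => _ [].
  have h3 : N%:R * e' <= eps / 2.
    rewrite /e' mulrCA ler_piMr ?divr_ge0 // ?ltW //.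
    by rewrite ltr_pdivrMr ?ltr0Sn // mul1r ltr_nat.
  lra.
Qed.

Lemma Gap_all E : measurable E -> Gap E.
Proof.
move=> mE; apply: (smallest_sub Gap_sigma _ mE).
move=> _ [i ->]; split; first exact: meas_coord.
move=> eps e0; exists [:: i], [set w : T | w i = true]; split; first exact: meas_coord.
split.
  by move=> v v' hv /= <-; rewrite hv // inE.
rewrite (_ : symd _ _ = set0) ?pr0 ?ltW //.
by apply/seteqP; split => v // [[]|[]].
Qed.


Lemma harris A B : measurable A -> measurable B -> decr A -> decr B ->
  pr A * pr B <= pr (A `&` B).
Proof.
move=> mA mB dA dB; apply/ler_addgt0Pr => e e0.
have [_ HA] := Gap_all A mA.
have [K [C [mC [dC hC]]]] := HA e e0.
have := @harris_approx A B C K mA mB mC dA dB dC.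
lra.
Qed.

End Harris.
Arguments pr {R I} P E.
Arguments decr {I} A.

Theorem lemma5 (R : realType) (I : countType) (P : probability (Omega I) R)
  (L : nat) (theta Pb : R) (S : nat -> Omega I -> \bar R) :
  (1 <= L)%N -> 0 < theta ->
  is_product_measure P ->
  (forall t, (t <= L)%N -> measurable_fun setT (S t)) ->
  (forall t w, (t <= L)%N -> (0 < S t w)%E) ->
  (forall t w w', (t <= L)%N -> conf_le w w' -> (S t w' <= S t w)%E) ->
  0 <= Pb < 1 ->
  (forall t, (t <= L)%N -> P [set w | (theta%:E < S t w)%E] = (1 - Pb)%:E) ->
  Pout P S theta Pb L <= 1 - (1 - Pb) ^+ L.+1.
Proof.
move=> _ _ [p [hp hP]] hS _ hmono /andP[Pb0 Pb1] hA.
pose A t := [set w : Omega I | (theta%:E < S t w)%E].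
pose B k := [set w : Omega I | forall t, (t <= k)%N -> (theta%:E < S t w)%E].
have mA t : (t <= L)%N -> measurable (A t).
  move=> tL; rewrite /A -[X in measurable X]setTI.
  exact: (emeasurable_fun_o_infty measurableT (hS t tL)).
have dA t : (t <= L)%N -> decr (A t).
  move=> tL v v' vv' /= h; exact: lt_le_trans h (hmono t v v' tL vv').
have prA t : (t <= L)%N -> pr P (A t) = 1 - Pb.
  by move=> tL; rewrite /pr /A hA.
have key : forall k, (k <= L)%N ->
    [/\ measurable (B k), decr (B k) & (1 - Pb) ^+ k.+1 <= pr P (B k)].
  elim=> [|k IH] kL.
    have -> : B 0%N = A 0%N.
      apply/seteqP; split => w /=; first by apply.
      by move=> h t; rewrite leqn0 => /eqP ->.
    by split; [exact: mA|exact: dA|rewrite expr1 prA].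
  have [mB dB hB] := IH (ltnW kL).
  have -> : B k.+1 = B k `&` A k.+1.
    apply/seteqP; split => w /=.
      by move=> h; split; [move=> t tk; apply: h; exact: leqW|apply: h].
    move=> [h1 h2] t; rewrite leq_eqVlt => /orP[/eqP ->//|]; rewrite ltnS; exact: h1.
  split; first exact: measurableI (mA _ kL).
    move=> v v' vv' [h1 h2]; split; [exact: dB vv' h1|exact: dA kL v v' vv' h2].
  have := @harris R I P p hp hP (B k) (A k.+1) mB (mA _ kL) dB (dA _ kL).
  rewrite prA // exprS => h; apply: le_trans h.
  rewrite mulrC ler_wpM2r //; lra.
have [_ _ hBL] := key L (leqnn L).
rewrite /Pout /Pfail.
have -> : fine (P [set w | (theta%:E < S 0%N w)%E]) = 1 - Pb by rewrite hA.
change (fine (P (B L))) with (pr P (B L)).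
have hPb : 1 - Pb != 0 by rewrite subr_eq0 eq_sym lt_eqF.
rewrite (_ : Pb + (1 - Pb) * (1 - pr P (B L) / (1 - Pb)) = 1 - pr P (B L)).
  lra.
by field.
Qed.
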